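(* Let $\beta=(\pi_\ell)_{\ell=1}^L$ be a chainable architecture of depth $L\ge 2$. Then $\mathcal{B}^\beta\subseteq\mathcal{B}^{\beta_s}$ for every $s\in\{1,\dots,L-1\}$. Consequently, for every complex matrix $\mathbf{A}$ of appropriate size, $$E^\beta(\mathbf{A})\ge\max_{1\le s\le L-1}E^{\beta_s}(\mathbf{A}).$$
   Context: A pattern is a tuple $\pi=(a,b,c,d)$ of positive integers; $\mathbf{S}_\pi:=\mathbf{I}_a\otimes\mathbf{1}_{b\times c}\otimes\mathbf{I}_d\in\{0,1\}^{abd\times acd}$. A $\pi$-factor is a complex $abd\times acd$ matrix with support in that of $\mathbf{S}_\pi$; $\Sigma^\pi$ is the set of $\pi$-factors. Patterns $\pi=(a,b,c,d),\pi'=(a',b',c',d')$ are chainable if $ac/a'=b'd'/d$ is an integer, $a\mid a'$, $d'\mid d$; then $\pi*\pi':=(a,bd/d',a'c'/a,d')$. An architecture $\beta=(\pi_\ell)_{\ell=1}^L$ is a sequence of patterns with $a_\ell c_\ell d_\ell=a_{\ell+1}b_{\ell+1}d_{\ell+1}$, chainable if consecutive pairs are chainable; $\pi_p*\cdots*\pi_q$ is the iterated product. For an architecture $\alpha=(\pi'_\ell)_{\ell=1}^K$, $\mathcal{B}^\alpha:=\{\mathbf{X}_1\cdots\mathbf{X}_K:\mathbf{X}_\ell\in\Sigma^{\pi'_\ell}\}$ and $E^\alpha(\mathbf{A}):=\inf_{\mathbf{B}\in\mathcal{B}^\alpha}\|\mathbf{A}-\mathbf{B}\|_F$. For $s\in\{1,\dots,L-1\}$,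 $\beta_s:=(\pi_1*\cdots*\pi_s,\ \pi_{s+1}*\cdots*\pi_L)$. *)

(* Defs.v *)
From HB Require Import structures.
From mathcomp Require Import all_boot all_order all_algebra.
From mathcomp Require Import all_classical all_reals.
From mathcomp Require Import complex mxtens.
Set Implicit Arguments. Unset Strict Implicit. Unset Printing Implicit Defensive.
Import Order.TTheory GRing.Theory Num.Theory.
Local Open Scope ring_scope.

Record pattern := Pattern { pa : nat; pb : nat; pc : nat; pd : nat }.

Definition pattern_pos (p : pattern) : bool :=
  [&& 0 < pa p, 0 < pb p, 0 < pc p & 0 < pd p]%N.

Definition prows (p : pattern) : nat := (pa p * pb p * pd p)%N.
Definition pcols (p : pattern) : nat := (pa p * pc p * pd p)%N.

Definition Smat (R : pzRingType) (p : pattern) : 'M[R]_(prows p, pcols p) :=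
  (1%:M : 'M[R]_(pa p)) *t (const_mx 1 : 'M[R]_(pb p, pc p)) *t (1%:M : 'M[R]_(pd p)).

Definition is_factor (R : realType) (p : pattern) (m n : nat)
    (X : 'M[R[i]]_(m, n)) : Prop :=
  exists e : (prows p = m) * (pcols p = n),
    forall i j, castmx e (Smat R[i] p) i j = 0 -> X i j = 0.

Definition chainable (p q : pattern) : bool :=
  [&& (pa q %| pa p * pc p)%N, (pd p %| pb q * pd q)%N,
      (pa p * pc p %/ pa q == pb q * pd q %/ pd p)%N,
      (pa p %| pa q)%N & (pd q %| pd p)%N].

Definition pstar (p q : pattern) : pattern :=
  Pattern (pa p) (pb p * pd p %/ pd q)%N (pa q * pc q %/ pa p)%N (pd q).

Definition architecture (ps : seq pattern) : Prop :=
  all pattern_pos ps /\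
  forall l, (l.+1 < size ps)%N ->
    pcols (nth (Pattern 1 1 1 1) ps l) = prows (nth (Pattern 1 1 1 1) ps l.+1).

Definition chainable_arch (ps : seq pattern) : Prop :=
  forall l, (l.+1 < size ps)%N ->
    chainable (nth (Pattern 1 1 1 1) ps l) (nth (Pattern 1 1 1 1) ps l.+1).

Definition iprod (ps : seq pattern) : pattern :=
  match ps with
  | [::] => Pattern 1 1 1 1
  | p :: ps' => foldl pstar p ps'
  end.

Definition beta_s (ps : seq pattern) (s : nat) : seq pattern :=
  [:: iprod (take s ps); iprod (drop s ps)].

Inductive inB (R : realType) : seq pattern -> forall m n, 'M[R[i]]_(m, n) -> Prop :=
  | inB_one (p : pattern) m n (X : 'M[R[i]]_(m, n)) :
      is_factor p X -> inB [:: p] X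
  | inB_cons (p : pattern) (ps : seq pattern) m k n
      (X : 'M[R[i]]_(m, k)) (Y : 'M[R[i]]_(k, n)) :
      is_factor p X -> inB ps Y -> ps <> [::] -> inB (p :: ps) (X *m Y).

Definition frob (R : realType) m n (A : 'M[R[i]]_(m, n)) : R :=
  Num.sqrt (\sum_(i < m) \sum_(j < n)
              ((complex.Re (A i j)) ^+ 2 + (complex.Im (A i j)) ^+ 2)).

Definition Err (R : realType) (al : seq pattern) m n (A : 'M[R[i]]_(m, n)) : R :=
  inf [set frob (A - B) | B in [set B : 'M[R[i]]_(m, n) | inB al B]].

Definition arows (ps : seq pattern) : nat := prows (head (Pattern 1 1 1 1) ps).
Definition acols (ps : seq pattern) : nat := pcols (last (Pattern 1 1 1 1) ps).

(* Main.v *)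
Require Import Defs.
From HB Require Import structures.
From mathcomp Require Import all_boot all_order all_algebra.
From mathcomp Require Import all_classical all_reals.
From mathcomp Require Import complex mxtens.
From mathcomp Require Import zify.
Import Order.TTheory GRing.Theory Num.Theory.
Local Open Scope ring_scope.
Set Implicit Arguments. Unset Strict Implicit.

Lemma Smat_E (R : realType) (p : pattern) (r : 'I_(prows p)) (c : 'I_(pcols p)) :
  (Smat R[i] p) r c = ((r %/ (pb p * pd p) == c %/ (pc p * pd p))%N && (r %% pd p == c %% pd p)%N)%:R.
Proof.
rewrite /Smat /tensmx !mxE -!val_eqE /= mulr1.
rewrite -!divnMA ![(pd p * _)%N]mulnC.
by case: (_ == _); case: (_ == _); rewrite ?mulr1 ?mulr0 ?mul0r.
Qed.

Definition supp (R : realType) m n (A D : nat) (X : 'M[R[i]]_(m, n)) : Prop :=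
  forall (r : 'I_m) (c : 'I_n), X r c != 0 ->
    ((r %/ (m %/ A) == c %/ (n %/ A)) && (r %% D == c %% D))%N.
Arguments supp {R m n}.

Lemma prows_div p : (0 < pa p)%N -> (prows p %/ pa p = pb p * pd p)%N.
Proof. by move=> h; rewrite /prows -mulnA mulKn. Qed.
Lemma pcols_div p : (0 < pa p)%N -> (pcols p %/ pa p = pc p * pd p)%N.
Proof. by move=> h; rewrite /pcols -mulnA mulKn. Qed.

Lemma factor_supp (R : realType) p m n (X : 'M[R[i]]_(m, n)) :
  pattern_pos p -> is_factor p X ->
  [/\ prows p = m, pcols p = n & supp (pa p) (pd p) X].
Proof.
move=> /and4P[pa0 pb0 pc0 pd0] [[e1 e2] H].
case: m / e1 X H => X; case: n / e2 X => X H.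
split=> // r c nz.
have := H r c; rewrite castmx_id Smat_E prows_div // pcols_div //.
case: (_ && _) => //.
by move=> /(_ erefl) /eqP; rewrite (negbTE nz).
Qed.

Lemma supp_factor (R : realType) p m n (X : 'M[R[i]]_(m, n)) :
  pattern_pos p -> prows p = m -> pcols p = n -> supp (pa p) (pd p) X ->
  is_factor p X.
Proof.
move=> /and4P[pa0 pb0 pc0 pd0] e1 e2 H; exists (e1, e2).
case: m / e1 X H => X; case: n / e2 X => X H r c.
rewrite castmx_id Smat_E.
have := H r c; rewrite prows_div // pcols_div //.
case: (_ && _) => /=.
- by move=> _ /eqP; rewrite oner_eq0.
- by move=> h _; apply/eqP; apply/negPn/negP => /h.
Qed.

Lemma div_split x k A A' : (0 < A)%N -> (0 < A')%N -> (A %| A')%N -> (A' %| k)%N ->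
  (x %/ (k %/ A) = x %/ (k %/ A') %/ (A' %/ A))%N.
Proof.
move=> A0 A'0 /dvdnP[t eA] /dvdnP[q ->]; rewrite eA in A'0 *.
rewrite (mulnK q A'0) (mulnK t A0) mulnA (mulnK _ A0).
by rewrite divnMA.
Qed.

Lemma supp_mul (R : realType) A D A' D' m k n (X : 'M[R[i]]_(m, k)) (Y : 'M[R[i]]_(k, n)) :
  (0 < A)%N -> (0 < A')%N -> (A %| A')%N -> (D' %| D)%N -> (A' %| k)%N -> (A' %| n)%N ->
  supp A D X -> supp A' D' Y -> supp A D' (X *m Y).
Proof.
move=> A0 A'0 AA' DD' Ak An HX HY r c.
rewrite mxE => nz.
have [k0 /andP[h1 h2]] : exists k0, (X r k0 != 0) && (Y k0 c != 0).
  apply/existsP; move: nz; apply: contraR => /existsPn H.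
  rewrite big1 // => k0 _; move: (H k0); rewrite negb_and !negbK.
  by case/orP => /eqP ->; rewrite ?mul0r ?mulr0.
move: (HX _ _ h1) (HY _ _ h2) => /andP[/eqP e1 /eqP e2] /andP[/eqP e3 /eqP e4].
apply/andP; split; apply/eqP.
  rewrite e1 (div_split k0 A0 A'0 AA' Ak) (div_split c A0 A'0 AA' An).
  by rewrite e3.
by rewrite -(modn_dvdm r DD') e2 (modn_dvdm k0 DD') e4.
Qed.

Notation dflt := (Pattern 1 1 1 1).

Lemma chain_cons (p q : pattern) (r : seq pattern) : chainable_arch (p :: q :: r) ->
  chainable p q /\ chainable_arch (q :: r).
Proof. by move=> H; split; [exact: (H 0%N) | move=> l hl; exact: (H l.+1)]. Qed.

Lemma chain_div p ps : chainable_arch (p :: ps) ->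
  (pa p %| pa (last p ps))%N /\ (pd (last p ps) %| pd p)%N.
Proof.
elim: ps p => [|q r IH] p /=; first by rewrite !dvdnn.
move=> /chain_cons[/and5P[_ _ _ h1 h2] /(IH _)[h3 h4]].
by split; [exact: dvdn_trans h1 h3 | exact: dvdn_trans h4 h2].
Qed.

Lemma inB_supp (R : realType) ps m n (M : 'M[R[i]]_(m, n)) :
  inB ps M -> all pattern_pos ps -> chainable_arch ps ->
  [/\ prows (head dflt ps) = m, pcols (last dflt ps) = n &
      supp (pa (head dflt ps)) (pd (last dflt ps)) M].
Proof.
elim=> {ps m n M} [p m n X Xf | p ps m k n X Y Xf YB IH ne] /=.
  by move=> /andP[pp _] _; apply: factor_supp.
case: ps YB IH ne => [//|q r] YB IH _ /andP[pp allr] ch.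
have [chpq chr] := chain_cons ch.
have [e1 e2 sY] := IH allr chr.
have [e3 e4 sX] := factor_supp pp Xf.
move: e2 sY; rewrite /= => e2 sY.
split=> //.
have /andP[qp _] := allr.
move: pp qp => /and4P[pa0 _ _ _] /and4P[qa0 qb0 qc0 qd0].
move: chpq => /and5P[_ _ _ apq dqp].
have [aql dlq] := chain_div chr.
apply: (supp_mul pa0 qa0 apq _ _ _ sX sY).
- exact: dvdn_trans dlq dqp.
- by rewrite -e1 /prows -!mulnA dvdn_mulr.
- by rewrite -e2 /pcols -!mulnA; apply: dvdn_trans aql (dvdn_mulr _ _).
Qed.

Lemma pstar_props p q : pattern_pos p -> pattern_pos q -> chainable p q ->
  [/\ pattern_pos (pstar p q), prows (pstar p q) = prows p &
      pcols (pstar p q) = pcols q].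
Proof.
move=> /and4P[a0 b0 c0 d0] /and4P[a0' b0' c0' d0'] /and5P[_ _ _ aa dd].
have bd : (pd q %| pb p * pd p)%N by apply: dvdn_mull.
have ac : (pa p %| pa q * pc q)%N by apply: dvdn_mulr.
rewrite /pattern_pos /prows /pcols /pstar /=.
split.
- apply/and4P; split=> //.
    by rewrite divn_gt0 // dvdn_leq // muln_gt0 b0.
  by rewrite divn_gt0 // dvdn_leq // muln_gt0 a0'.
- by rewrite -mulnA divnK // mulnA.
- by rewrite [(pa p * _)%N]mulnC divnK.
Qed.

Lemma pstar_chain p q s : pattern_pos p -> pattern_pos q -> chainable p q ->
  chainable q s -> chainable (pstar p q) s.
Proof.
move=> /and4P[a0 b0 c0 d0] _ /and5P[_ _ _ aa dd] /and5P[h1 h2 h3 h4 h5].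
have ac : (pa p %| pa q * pc q)%N by apply: dvdn_mulr.
rewrite /chainable /pstar /= [(pa p * _)%N]mulnC divnK //.
by rewrite h1 h2 h3 h5 (dvdn_trans aa h4).
Qed.

Lemma iprod_props ps p : all pattern_pos (p :: ps) -> chainable_arch (p :: ps) ->
  let P := iprod (p :: ps) in
  [/\ pattern_pos P, pa P = pa p, pd P = pd (last p ps), prows P = prows p &
      pcols P = pcols (last p ps)].
Proof.
elim: ps p => [|q r IH] p /=; first by move=> /andP[-> _].
move=> /and3P[pp pq pr] ch.
have [chpq chr] := chain_cons ch.
have [sp sr sc] := pstar_props pp pq chpq.
have ch' : chainable_arch (pstar p q :: r).
  case: r {IH pr chr} ch => [|s r] ch; first by case.
  case=> [_|l hl]; first by apply: pstar_chain => //; case: (chain_cons ch) => _ /chain_cons[].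
  exact: (ch l.+2).
have := IH (pstar p q); rewrite /= sp pr => /(_ isT ch') [h1 h2 h3 h4 h5].
move: h1 h2 h3 h4 h5; rewrite /=.
case: r {IH pr chr ch ch'} => [|s r] /= h1 h2 h3 h4 h5.
  by split=> //; rewrite ?h5 ?h4.
by split=> //; rewrite h4.
Qed.

Lemma inB_factor (R : realType) ps m n (M : 'M[R[i]]_(m, n)) :
  inB ps M -> ps <> [::] -> all pattern_pos ps -> chainable_arch ps ->
  is_factor (iprod ps) M.
Proof.
move=> H; case: ps H => [//|p ps] H _ al ch.
have [e1 e2 sM] := inB_supp H al ch.
have [h1 h2 h3 h4 h5] := iprod_props al ch.
apply: supp_factor => //; first by rewrite h4.
  by rewrite h5.
by rewrite h2 h3.
Qed.

Lemma inB_split (R : realType) ps m n (M : 'M[R[i]]_(m, n)) :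
  inB ps M -> forall s, (0 < s < size ps)%N ->
  exists k (M1 : 'M[R[i]]_(m, k)) (M2 : 'M[R[i]]_(k, n)),
    [/\ M = M1 *m M2, inB (take s ps) M1 & inB (drop s ps) M2].
Proof.
elim=> {ps m n M} [p m n X Xf | p ps m k n X Y Xf YB IH ne] s /=.
  by case: s => [|[]].
case: s => [//|[|s]] /= hs.
  exists k, X, Y; split=> //; rewrite ?take0 ?drop0.
  exact: inB_one.
  by [].
move: hs; rewrite ltnS => hs.
have [k' [Y1 [Y2 [eY h1 h2]]]] := IH s.+1 hs.
exists k', (X *m Y1), Y2; split=> //.
  by rewrite eY mulmxA.
apply: inB_cons => //.
by case: ps {YB IH ne} hs h1 h2.
Qed.

Lemma inB_zero (R : realType) ps p : architecture (p :: ps) ->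
  inB (p :: ps) (0 : 'M[R[i]]_(prows p, pcols (last p ps))).
Proof.
elim: ps p => [|q r IH] p /= [al ar].
  apply: inB_one; exists (erefl, erefl) => r0 c _; rewrite mxE //.
have epq : pcols p = prows q by exact: (ar 0%N).
have arq : architecture (q :: r).
  split; first by case/andP: al.
  by move=> l hl; exact: (ar l.+1).
have X0 : is_factor p (0 : 'M[R[i]]_(prows p, prows q)).
  by exists (erefl, epq) => r0 c; rewrite mxE.
have := inB_cons X0 (IH q arq) (fun e : q :: r = [::] => ltac:(discriminate e)).
by rewrite mul0mx.
Qed.

Lemma chain_take ps s : chainable_arch ps -> chainable_arch (take s ps).
Proof.
move=> ch l hl; rewrite size_take in hl.
have [hs hz] : (l.+1 < s)%N /\ (l.+1 < size ps)%N.
  move: hl; case: ifP => h1 h2; first by split=> //; apply: ltn_trans h1.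
  by split=> //; apply: leq_trans h2 _; rewrite leqNgt h1.
rewrite !nth_take //; last by apply: ltn_trans hs.
exact: ch.
Qed.

Lemma chain_drop ps s : chainable_arch ps -> chainable_arch (drop s ps).
Proof.
move=> ch l hl; rewrite size_drop in hl.
rewrite !nth_drop addnS; apply: ch.
by move: hl; lia.
Qed.

Lemma all_take_drop (ps : seq pattern) s : all pattern_pos ps ->
  all pattern_pos (take s ps) /\ all pattern_pos (drop s ps).
Proof. by rewrite -{1}(cat_take_drop s ps) all_cat => /andP. Qed.

Lemma frob_ge0 (R : realType) m n (A : 'M[R[i]]_(m, n)) : 0 <= frob A.
Proof. exact: sqrtr_ge0. Qed.

Definition Sset (R : realType) (al : seq pattern) m n (A : 'M[R[i]]_(m, n)) : set R :=
  [set frob (A - B) | B in [set B : 'M[R[i]]_(m, n) | inB al B]].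

Lemma ErrE (R : realType) (al : seq pattern) m n (A : 'M[R[i]]_(m, n)) :
  Err al A = inf (Sset al A).
Proof. by []. Qed.

Unset Implicit Arguments.

Theorem lemma7p5 (R : realType) (beta : seq pattern) :
  architecture beta -> chainable_arch beta -> (2 <= size beta)%N ->
  (forall s : nat, (1 <= s <= size beta - 1)%N ->
     forall m n (M : 'M[R[i]]_(m, n)), inB beta M -> inB (beta_s beta s) M) /\
  (forall A : 'M[R[i]]_(arows beta, acols beta),
     \big[Num.max/0]_(1 <= s < size beta) Err (beta_s beta s) A <= Err beta A).
Proof.
move=> arch ch sz.
have part1 : forall s : nat, (1 <= s <= size beta - 1)%N ->
     forall m n (M : 'M[R[i]]_(m, n)), inB beta M -> inB (beta_s beta s) M.
  move=> s hs m n M HM.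
  have hs' : (0 < s < size beta)%N by move: hs sz; lia.
  have [k [M1 [M2 [-> h1 h2]]]] := inB_split HM hs'.
  have [alt ald] := all_take_drop s arch.1.
  have tne : take s beta <> [::].
    by move=> e; have := size_take s beta; rewrite e /=; move: hs'; case: ifP => _; lia.
  have dne : drop s beta <> [::].
    by move=> e; have := size_drop s beta; rewrite e /=; move: hs'; lia.
  apply: inB_cons => //.
  - apply: (inB_factor h1) => //; exact: chain_take.
  - apply/inB_one/(inB_factor h2) => //; exact: chain_drop.
split=> // A.
case: beta arch ch sz part1 A => [//|p ps] arch ch sz part1 A.
set S := fun al => Sset al A.
have ne : nonempty (S (p :: ps)).
  exists (frob (A - 0)), 0 => //.
  exact: (@inB_zero R ps p arch).
have lb0 : forall al, lbound (S al) 0.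
  by move=> al y [B _ <-]; apply: frob_ge0.
have E0 : 0 <= Err (p :: ps) A by rewrite ErrE; apply: lb_le_inf ne (lb0 _).
rewrite big_seq_cond; apply: (big_ind (fun x => x <= Err (p :: ps) A)) => //.
  by move=> x y hx hy; rewrite ge_max hx hy.
move=> s /andP[+ _]; rewrite mem_index_iota => /andP[s1 s2].
rewrite !ErrE; apply: lb_le_inf ne _ => y [B HB <-].
have hs : (1 <= s <= size (p :: ps) - 1)%N by move: s1 s2 => /= ; lia.
apply: (ge_inf (E := S (beta_s (p :: ps) s))).
  by exists 0; apply: lb0.
by exists B => //; apply: part1.
Qed.
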